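(* Let $y:A\to\Delta(B)$ be given (with $A=S$). Then: (a) $U^1(\mu_0,y)\ge U^1(\mu,y)$ for every $\mu\in\mathcal{M}$ if and only if $\sum_{s\in S}u^1(s,y(\cdot\mid s))\ge\sum_{s\in S}u^1(s,y(\cdot\mid\phi(s)))$ for every permutation $\phi$ of $S$. (b) $U^1(\mu_0,y)>U^1(\mu,y)$ for every $\mu\in\mathcal{M}$ with $\mu\neq\mu_0$ if and only if $\sum_{s\in S}u^1(s,y(\cdot\mid s))>\sum_{s\in S}u^1(s,y(\cdot\mid\phi(s)))$ for every permutation $\phi$ of $S$ other than the identity.
   Context: $S$ is a finite set, $A=S$, $B$ a finite set, $u^1:S\times B\to\mathbb{R}$, extended linearly to $u^1(s,\beta)=\sum_b\beta(b)u^1(s,b)$ for $\beta\in\Delta(B)$. $m\in\Delta(S)$ has full support (it is the invariant measure of an irreducible Markov chain on $S$). $\mathcal{M}\subset\Delta(S\times A)$ is the set of distributions on $S\times A$ both of whose marginals equal $m$; $\mu_0\in\mathcal{M}$ is given by $\mu_0(s,s)=m(s)$, $\mu_0(s,a)=0$ for $s\ne a$. For $\mu\in\mathcal{M}$, $U^1(\mu,y)=\sum_{s,a}\mu(s,a)u^1(s,y(\cdot\mid a))$. *)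

(* Defs.v *)
From mathcomp Require Import all_boot all_order all_algebra all_fingroup.
Set Implicit Arguments. Unset Strict Implicit. Unset Printing Implicit Defensive.
Import Order.TTheory GRing.Theory Num.Theory.
Local Open Scope ring_scope.

Definition is_dist (R : realFieldType) (T : finType) (p : T -> R) : Prop :=
  (forall t, 0 <= p t) /\ \sum_(t : T) p t = 1.

Definition uext (R : realFieldType) (S B : finType) (u1 : S -> B -> R)
  (s : S) (beta : B -> R) : R := \sum_(b : B) beta b * u1 s b.

Definition in_M (R : realFieldType) (S : finType) (m : S -> R)
  (mu : {ffun S * S -> R}) : Prop :=
  (forall sa, 0 <= mu sa) /\
  (forall s, \sum_(a : S) mu (s, a) = m s) /\
  (forall a, \sum_(s : S) mu (s, a) = m a).

Definition mu0 (R : realFieldType) (S : finType) (m : S -> R) : {ffun S * S -> R} :=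
  [ffun sa => if sa.1 == sa.2 then m sa.1 else 0].

Definition U1 (R : realFieldType) (S B : finType) (u1 : S -> B -> R)
  (mu : {ffun S * S -> R}) (y : S -> B -> R) : R :=
  \sum_(s : S) \sum_(a : S) mu (s, a) * uext u1 s (y a).

(* Main.v *)
Require Import Defs.
From mathcomp Require Import all_boot all_order all_algebra all_fingroup.
From mathcomp Require Import ring.
Set Implicit Arguments. Unset Strict Implicit. Unset Printing Implicit Defensive.
Import Order.TTheory GRing.Theory Num.Theory.
Local Open Scope ring_scope.

Section Aux.
Variable R : realFieldType.

Lemma exmin (T : finType) (F : T -> R) (P : pred T) x0 : P x0 ->
  exists x, P x /\ forall y, P y -> F x <= F y.
Proof.
move=> Px0.
case: (@Order.TotalTheory.arg_minP _ R T x0 P F Px0) => x Px Hm.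
by exists x; split.
Qed.

Lemma sum_if_eq (T : finType) (F : T -> R) x :
  \sum_(a : T) (if a == x then F a else 0) = F x.
Proof. by rewrite -big_mkcond big_pred1_eq. Qed.

End Aux.
Section Cyc.
Variable R : realFieldType.
Variable T : finType.
Variable nu : T -> T -> R.
Hypothesis hnn : forall s a, 0 <= nu s a.
Hypothesis hbal : forall s, \sum_a nu s a = \sum_a nu a s.

Definition e x y := (x != y) && (0 < nu x y).
Definition f x := if [pick y | e x y] is Some y then y else x.

Lemma f_spec x : f x != x -> e x (f x).
Proof. by rewrite /f; case: pickP => [y Hy|_] //; rewrite eqxx. Qed.

Lemma f_e x y : e x y -> e x (f x).
Proof. by move=> Hxy; rewrite /f; case: pickP => [z Hz|/(_ y)] //; rewrite Hxy. Qed.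

Lemma succ_closed x y : e x y -> exists z, e y z.
Proof.
move=> /andP [nxy pxy].
have Hb : \sum_(a | a != y) nu y a = \sum_(a | a != y) nu a y.
  by move: (hbal y); rewrite (bigD1 y) //= (bigD1 y (P := predT)) //= => /addrI.
apply/existsP; apply: contraT; rewrite negb_exists => /forallP Hn.
have : \sum_(a | a != y) nu y a <= 0.
  suff: \sum_(a | a != y) nu y a <= \sum_(a | a != y) (0:R) by rewrite big1_eq.
  apply: ler_sum => a nay; move: (Hn a); rewrite /e eq_sym nay /= -leNgt //.
rewrite Hb (bigD1 x) //= => H.
have : 0 < nu x y + \sum_(i | (i != y) && (i != x)) nu i y.
  by apply: ltr_wpDr => //; apply: sumr_ge0.
by rewrite ltNge H.
Qed.

Lemma iter_has x0 y0 : e x0 y0 -> forall n, exists z, e (iter n f x0) z.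
Proof.
move=> H; elim=> [|n [z Hz]]; first by exists y0.
by rewrite iterS; apply: (succ_closed (f_e Hz)).
Qed.

Definition per x := [exists k : 'I_#|T|.+1, (0 < k)%N && (iter k f x == x)].

Lemma iter_period k x n : iter k f x = x -> iter (k * n) f x = x.
Proof.
move=> H; elim: n => [|n IH]; first by rewrite muln0.
by rewrite mulnS iterD IH H.
Qed.

Lemma per_ex x : per x -> exists2 k, (0 < k)%N & iter k f x = x.
Proof. by move=> /existsP [k /andP [k0 /eqP Hk]]; exists k. Qed.

Lemma per_f x : per x -> per (f x).
Proof.
move=> /existsP [k /andP [k0 /eqP Hk]]; apply/existsP; exists k.
by rewrite k0 /= -iterSr iterS Hk.
Qed.

Definition phif x := if per x then f x else x.

Lemma phif_inj : injective phif.
Proof.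
have key : forall x x', per x -> per x' -> f x = f x' -> x = x'.
  move=> x x' /per_ex [k k0 Hk] /per_ex [k' k0' Hk'] Hf.
  have kk : (0 < k * k')%N by rewrite muln_gt0 k0.
  rewrite -(iter_period k' Hk) -[in RHS](iter_period k Hk') (mulnC k' k).
  by rewrite -(prednK kk) !iterSr Hf.
move=> x x'; rewrite /phif.
case px: (per x); case px': (per x') => //.
- exact: key.
- by move=> Hf; move: (per_f px); rewrite Hf px'.
- by move=> Hf; move: (per_f px'); rewrite -Hf px.
Qed.

Definition phi : {perm T} := perm phif_inj.

Lemma phi_pos s : phi s != s -> 0 < nu s (phi s).
Proof.
rewrite permE /phif; case: (per s) => //; last by rewrite eqxx.
by move=> /f_spec /andP [].
Qed.

Lemma phi_nontriv x0 y0 : e x0 y0 -> phi != 1%g.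
Proof.
move=> Hxy.
pose g (i : 'I_#|T|.+1) := iter i f x0.
have : ~~ injectiveb g.
  apply/negP => /injectiveP Hg; move: (leq_card g Hg).
  by rewrite card_ord ltnn.
case/injectivePn => i [j nij Hij].
wlog lij : i j nij Hij / (i < j)%N.
  move=> W; case: (ltngtP i j) => l.
  - exact: (W i j nij Hij l).
  - by apply: (W j i); rewrite // eq_sym.
  - by move: nij; rewrite (val_inj l) eqxx.
pose z := iter i f x0.
have pz : per z.
  apply/existsP.
  have kb : (j - i < #|T|.+1)%N by apply: leq_ltn_trans (leq_subr _ _) (ltn_ord j).
  exists (Ordinal kb); rewrite /= subn_gt0 lij /= /z -iterD subnK ?(ltnW lij) //.
  by rewrite /g in Hij; rewrite Hij.
case: (iter_has Hxy i) => w Hw.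
have /andP [nz _] := f_e Hw.
apply/eqP => H1; move: (perm1 z); rewrite -H1 permE /phif pz => Hf.
by move: nz; rewrite /z -/z Hf eqxx.
Qed.

End Cyc.

Section Dec.
Variable R : realFieldType.
Variable T : finType.
Variable w : T -> T -> R.
Hypothesis hw0 : forall s, w s s = 0.

Definition nonneg (nu : T -> T -> R) := forall s a, 0 <= nu s a.
Definition bal (nu : T -> T -> R) := forall s, \sum_a nu s a = \sum_a nu a s.
Definition supp (nu : T -> T -> R) := [set p : T * T | (p.1 != p.2) && (0 < nu p.1 p.2)].
Definition W (nu : T -> T -> R) := \sum_s \sum_a nu s a * w s a.

Lemma reduce nu : nonneg nu -> bal nu -> forall x0 y0, e nu x0 y0 ->
  exists nu' : T -> T -> R, exists c : R, exists ph : {perm T},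
  [/\ 0 < c, ph != 1%g, nonneg nu', bal nu' &
      (#|supp nu'| < #|supp nu|)%N /\ W nu = W nu' + c * \sum_s w s (ph s)].
Proof.
move=> hnn hbal x0 y0 hxy.
pose ph := phi nu.
have ph1 : ph != 1%g := phi_nontriv hnn hbal hxy.
have [s0 hs0] : exists s, ph s != s.
  apply/existsP; apply: contraR ph1; rewrite negb_exists => /forallP H.
  by apply/eqP/permP => s; rewrite perm1; apply/eqP; move: (H s); rewrite negbK.
have [s1 [hs1 hmin]] := @exmin R T (fun s => nu s (ph s)) (fun s => ph s != s) s0 hs0.
set c := nu s1 (ph s1).
have c0 : 0 < c := phi_pos hs1.
pose d s a := if (ph s != s) && (a == ph s) then c else 0.
pose nu' s a := nu s a - d s a.
have d0 : forall s a, 0 <= d s a by move=> s a; rewrite /d; case: ifP => // _; exact: ltW.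
have E : forall s a, nu s a = nu' s a + d s a by move=> s a; rewrite /nu' subrK.
have drow : forall s, \sum_a d s a = if ph s != s then c else 0.
  move=> s; rewrite /d; case: (ph s != s) => /=.
  - exact: (sum_if_eq (fun _ => c)).
  - by rewrite big1.
have dcol : forall s, \sum_a d a s = if ph s != s then c else 0.
  move=> s; rewrite /d (bigD1 ((ph^-1)%g s)) //= permKV eqxx andbT.
  have -> : (s != (ph^-1)%g s) = (ph s != s).
    by rewrite -(inj_eq (@perm_inj _ ph)) permKV eq_sym.
  rewrite big1 ?addr0 // => a na; case: ifP => // /andP [_ /eqP Hs].
  by move: na; rewrite Hs permK eqxx.
exists nu', c, ph; split => //.
- move=> s a; rewrite /nu' subr_ge0 /d; case: ifP => // /andP [hs /eqP ->].
  exact: hmin.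
- by move=> s; rewrite /nu' !sumrB drow dcol hbal.
split.
- apply: proper_card; apply/properP; split.
    apply/subsetP => -[s a]; rewrite !inE /= => /andP [-> /= H].
    by apply: lt_le_trans H _; rewrite /nu' lerBlDr lerDl.
  exists (s1, ph s1); first by rewrite inE /= eq_sym hs1 c0.
  by rewrite inE /= /nu' /d hs1 eqxx /= subrr ltxx andbF.
- rewrite /W (eq_bigr (fun s => \sum_a nu' s a * w s a + c * w s (ph s))).
    by rewrite big_split /= mulr_sumr.
  move=> s _; rewrite (eq_bigr (fun a => nu' s a * w s a + d s a * w s a)).
    rewrite big_split /=; congr (_ + _).
    rewrite /d; case hs: (ph s != s) => /=.
    + by rewrite -(sum_if_eq (fun a => c * w s a)); apply: eq_bigr => a _; case: ifP; rewrite ?mul0r.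
    + rewrite big1; last by move=> a _; rewrite mul0r.
      by move: hs => /negbFE /eqP ->; rewrite hw0 mulr0.
  by move=> a _; rewrite E mulrDl.
Qed.

Hypothesis Hw : forall ph : {perm T}, 0 <= \sum_s w s (ph s).

Lemma nonstrict n : forall nu, nonneg nu -> bal nu -> (#|supp nu| <= n)%N -> 0 <= W nu.
Proof.
elim: n => [|n IH] nu hnn hbal hc.
- rewrite /W big1 // => s _; rewrite big1 // => a _.
  case: (eqVneq s a) => [->|nsa]; first by rewrite hw0 mulr0.
  have : (s, a) \notin supp nu.
    move: hc; rewrite leqn0 => /eqP/cards0_eq ->.
    by rewrite inE.
  rewrite inE /= nsa /= -leNgt => H.
  have -> : nu s a = 0 by apply/eqP; rewrite eq_le H hnn.
  by rewrite mul0r.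
- case: (set_0Vmem (supp nu)) => [E|[[x0 y0] hp]].
    by apply: (IH) => //; rewrite E cards0.
  rewrite inE /= in hp.
  have [nu' [c [ph [c0 _ hnn' hbal' [hlt ->]]]]] := reduce hnn hbal hp.
  apply: addr_ge0; first by apply: IH => //; rewrite -ltnS; apply: leq_trans hlt hc.
  by apply: mulr_ge0; [exact: ltW | exact: Hw].
Qed.

Lemma strict (Hs : forall ph : {perm T}, ph != 1%g -> 0 < \sum_s w s (ph s))
  nu : nonneg nu -> bal nu -> forall x0 y0, e nu x0 y0 -> 0 < W nu.
Proof.
move=> hnn hbal x0 y0 hp.
have [nu' [c [ph [c0 ph1 hnn' hbal' [hlt ->]]]]] := reduce hnn hbal hp.
apply: ltr_wpDl; first exact: (nonstrict hnn' hbal' (leqnn _)).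
by apply: mulr_gt0 => //; exact: Hs.
Qed.

End Dec.


Section Main.
Variable R : realFieldType.
Variable S : finType.
Variable v : S -> S -> R.
Variable m : S -> R.
Hypothesis hm_pos : forall s, 0 < m s.

Definition UU (mu : {ffun S * S -> R}) := \sum_s \sum_a mu (s, a) * v s a.
Definition ww s a := v s s - v s a.
Lemma ww0 s : ww s s = 0. Proof. exact: subrr. Qed.

Lemma sum_if_eq' (T : finType) (F : T -> R) x :
  \sum_(a : T) (if x == a then F a else 0) = F x.
Proof. by rewrite -(sum_if_eq F x); apply: eq_bigr => a _; rewrite eq_sym. Qed.

Lemma sum_if_perm (T : finType) (ph : {perm T}) (c : R) a :
  \sum_(s : T) (if a == ph s then c else 0) = c.
Proof.
rewrite (bigD1 ((ph^-1)%g a)) //= permKV eqxx big1 ?addr0 // => s ns.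
by case: ifP => // /eqP H; move: ns; rewrite H permK eqxx.
Qed.

Lemma UU0 : UU (mu0 m) = \sum_s m s * v s s.
Proof.
apply: eq_bigr => s _; rewrite (bigD1 s) //= ffunE /= eqxx big1 ?addr0 // => a na.
by rewrite ffunE /= eq_sym (negbTE na) mul0r.
Qed.

Lemma Udiff mu : in_M m mu ->
  UU (mu0 m) - UU mu = W ww (fun s a => mu (s, a)).
Proof.
move=> [_ [hr _]]; rewrite UU0 /UU /W -sumrB; apply: eq_bigr => s _.
rewrite -hr mulr_suml -sumrB; apply: eq_bigr => a _.
by rewrite /ww mulrBr.
Qed.

Lemma M_props mu : in_M m mu ->
  nonneg (fun s a => mu (s, a)) /\ bal (fun s a => mu (s, a)).
Proof. by move=> [h0 [hr hc]]; split => [s a|s]; [exact: h0 | rewrite hr hc]. Qed.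

Lemma Hw_of (H : forall ph : {perm S}, \sum_s v s (ph s) <= \sum_s v s s) (ph : {perm S}) :
  0 <= \sum_s ww s (ph s).
Proof. by rewrite /ww sumrB subr_ge0; exact: H. Qed.

Lemma nontriv_pt (T : finType) (ph : {perm T}) : ph != 1%g -> exists s, ph s != s.
Proof.
move=> ph1; apply/existsP; apply: contraR ph1; rewrite negb_exists => /forallP H.
by apply/eqP/permP => s; rewrite perm1; apply/eqP; move: (H s); rewrite negbK.
Qed.

Lemma pert (s0 : S) (ph : {perm S}) : exists2 eps, 0 < eps &
  exists mu, [/\ in_M m mu, (ph != 1%g -> mu <> mu0 m) &
    UU mu = UU (mu0 m) - eps * (\sum_s v s s - \sum_s v s (ph s))].
Proof.
have [s1 [_ hmin]] := @exmin R S m predT s0 isT.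
set eps := m s1.
have e0 : 0 < eps := hm_pos s1.
pose mu := [ffun p : S * S => (if p.1 == p.2 then m p.1 - eps else 0)
                            + (if p.2 == ph p.1 then eps else 0)].
exists eps => //; exists mu; split.
- split; [|split].
  + move=> [s a]; rewrite ffunE /=; apply: addr_ge0.
      by case: ifP => // _; rewrite subr_ge0; exact: hmin.
    by case: ifP => // _; exact: ltW.
  + move=> s; under eq_bigr do rewrite ffunE /=.
    rewrite big_split /= (sum_if_eq' (fun _ => m s - eps)).
    by rewrite (sum_if_eq (fun _ => eps)) subrK.
  + move=> a; under eq_bigr do rewrite ffunE /=.
    rewrite big_split /= (sum_if_eq (fun s => m s - eps)).
    by rewrite sum_if_perm subrK.
- move=> /nontriv_pt [s hs] H; move: (congr1 (fun f : {ffun S * S -> R} => f (s, ph s)) H).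
  rewrite /= !ffunE /= eq_sym (negbTE hs) eqxx add0r => /eqP.
  by rewrite gt_eqF.
- rewrite UU0 /UU.
  have -> : \sum_s \sum_a mu (s, a) * v s a
      = \sum_s ((m s - eps) * v s s + eps * v s (ph s)).
    apply: eq_bigr => s _.
    under eq_bigr do rewrite ffunE /= mulrDl.
    rewrite big_split /=; congr (_ + _).
      rewrite -(sum_if_eq' (fun a => (m s - eps) * v s a)).
      by apply: eq_bigr => a _; case: ifP; rewrite ?mul0r.
    rewrite -(sum_if_eq (fun a => eps * v s a)).
    by apply: eq_bigr => a _; case: ifP; rewrite ?mul0r.
  rewrite big_split /=; under eq_bigr do rewrite mulrBl.
  rewrite sumrB -!mulr_sumr.
  set A := \sum_s m s * v s s. set B := \sum_s v s s. set C := \sum_s v s (ph s).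
  ring.
Qed.
End Main.

Unset Implicit Arguments.
Theorem lemma1 (R : realFieldType) (S B : finType) (u1 : S -> B -> R)
  (m : S -> R) (hm_pos : forall s, 0 < m s) (hm_sum : \sum_(s : S) m s = 1)
  (y : S -> B -> R) (hy : forall a, is_dist (y a)) :
  ((forall mu, in_M m mu -> U1 u1 mu y <= U1 u1 (mu0 m) y) <->
   (forall phi : {perm S},
      \sum_(s : S) uext u1 s (y (phi s)) <= \sum_(s : S) uext u1 s (y s)))
  /\
  ((forall mu, in_M m mu -> mu <> mu0 m -> U1 u1 mu y < U1 u1 (mu0 m) y) <->
   (forall phi : {perm S}, phi <> 1%g ->
      \sum_(s : S) uext u1 s (y (phi s)) < \sum_(s : S) uext u1 s (y s))).
Proof.
pose v := fun s a => uext u1 s (y a).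
have UUe : forall mu, U1 u1 mu y = UU v mu by [].
have hw0 := ww0 v.
case: (pickP (fun _ : S => true)) => [s0 _ | hno]; last first.
  have E : forall F : S -> R, \sum_s F s = 0.
    by move=> F; apply: big1 => s _; move: (hno s).
  split; split.
  - by move=> _ ph; rewrite !E.
  - by move=> _ mu _; rewrite /U1 !E.
  - move=> _ ph ph1; exfalso; apply: ph1; apply/permP => s; by move: (hno s).
  - move=> _ mu _ hne; exfalso; apply: hne; apply/ffunP => -[s a]; by move: (hno s).
split; split.
- move=> H ph.
  have [eps e0 [mu [hM _ hU]]] := pert v hm_pos s0 ph.
  move: (H mu hM); rewrite !UUe hU gerBl pmulr_rge0 // subr_ge0.
  by [].
- move=> H mu hM; rewrite !UUe -subr_ge0 Udiff //.
  have [hn hb] := M_props hM.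
  exact: (nonstrict hw0 (Hw_of H) hn hb (leqnn _)).
- move=> H ph ph1.
  have [eps e0 [mu [hM hne hU]]] := pert v hm_pos s0 ph.
  move: (H mu hM (hne (introN eqP ph1))); rewrite !UUe hU gtrBl pmulr_rgt0 // subr_gt0.
  by [].
- move=> H mu hM hne; rewrite !UUe -subr_gt0 Udiff //.
  have [hn hb] := M_props hM.
  have Hs : forall ph : {perm S}, ph != 1%g -> 0 < \sum_s ww v s (ph s).
    by move=> ph /eqP ph1; rewrite /ww sumrB subr_gt0; exact: H.
  have Hw : forall ph : {perm S}, 0 <= \sum_s ww v s (ph s).
    move=> ph; case: (eqVneq ph 1%g) => [->|ph1]; last exact: ltW (Hs ph ph1).
    by rewrite big1 // => s _; rewrite perm1 hw0.
  case: (boolP [exists s, exists a, e (fun s a => mu (s, a)) s a]).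
    move=> /existsP [s /existsP [a hp]].
    exact: (@strict R S (ww v) hw0 Hw Hs (fun s a => mu (s, a)) hn hb s a hp).
  rewrite negb_exists => /forallP hno; exfalso; apply: hne.
  case: hM => [h0 [hr hc]].
  have off : forall s a, s != a -> mu (s, a) = 0.
    move=> s a nsa; move: (hno s); rewrite negb_exists => /forallP /(_ a).
    rewrite /e nsa /= -leNgt => H1; apply/eqP; rewrite eq_le H1 h0.
    by [].
  apply/ffunP => -[s a]; rewrite ffunE /=.
  case: (eqVneq s a) => [<-|nsa]; last exact: off.
  rewrite -hr (bigD1 s) //= big1 ?addr0 // => b nb.
  by apply: off; rewrite eq_sym.
Qed.
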